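(* For every $h\in\{1,\dots,H-1\}$ and $\pi\in\Pi$, the quantities in FORCE satisfy $$\|\bar d^\pi_h-d^\pi_h\|_1\le\|\bar d^\pi_{h-1}-d^\pi_{h-1}\|_1+4\mathsf d\max_{\pi'\in\Pi}\|\hat d^{\pi'}_{h-1}-\bar d^{\pi'}_{h-1}\|_1.$$
   Context: Setting: finite-horizon episodic MDP $(\mathcal X,\mathcal A,P,H)$, measurable $\mathcal X$, finite $\mathcal A$ with $K=|\mathcal A|$, $[H]=\{0,\dots,H-1\}$, known initial distribution $d_0$; $d^\pi_h$ density of $x_h$ under Markov policy $\pi$; $\Pi$ a finite class of Markov policies. Low-rank: $P_h(x'\mid x,a)=\langle\phi^*_h(x,a),\mu^*_h(x')\rangle$, $\phi^*_h,\mu^*_h\in\mathbb R^{\mathsf d}$, $\|\phi^*_h\|_\infty\le1$, $\int\|\mu^*_h\|_1\le B^\mu$; $\mu^*$ known. Notation: $a\wedge b=\min(a,b)$, $0/0:=0$, $(\mathbf P^\pi_hd)(x'):=\iint P_h(x'\mid x,a)\pi_h(a\mid x)d(x)\mathrm dx\,\mathrm da$. Barycentric spanner of a set $S$ of functions with $m$-dimensional span: $\{s_1,\dots,s_m\}\subseteq S$ with every element of $S$ a linear combination of them with coefficients in $[-1,1]$. Algorithm FORCE (input $\Pi,\mu^*,n_{\rm mle},n_{\rm reg}$, $n=n_{\rm mle}+n_{\rm reg}$): with $\mathcal F_h:=\{\langle\mu^*_{h-1},\theta\rangle\in\Delta(\mathcal X):\|\theta\|_\infty\le1\}$, $\mathcal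 W_h:=\{\langle\mu^*_{h-1},\theta^{\rm up}\rangle/\langle\mu^*_{h-1},\theta^{\rm down}\rangle\text{ with sup-norm}\le\mathsf dK\}$; $\hat d^\pi_0=\tilde d^\pi_0=d_0$; for $h=1,\dots,H$: (1) choose $\pi^{h-1,1},\dots,\pi^{h-1,\mathsf d}\in\Pi$ with $\{\tilde d^{\pi^{h-1,i}}_{h-1}\}$ a barycentric spanner of $\{\tilde d^\pi_{h-1}\}_{\pi\in\Pi}$, $\Pi^{\rm expl}_{h-1}$ this set; (2) collect $n$ tuples $(x_{h-1},a_{h-1},x_h)$ by rolling in with a uniformly random element of $\Pi^{\rm expl}_{h-1}$ and then a uniform action; (3) split the tuples into $n_{\rm mle}$ and $n_{\rm reg}$; $\hat d^D_{h-1}\in\arg\max_{\mathcal F_{h-1}}\sum\log f(x^{(i)}_{h-1})$, $\hat d^{D,\dagger}_{h-1}\in\arg\max_{\mathcal F_h}\sum\log f(x^{(i)}_h)$; for each $\pi$, $\hat w^\pi_h\in\arg\min_{w\in\mathcal W_h}\sum_{\rm reg}(w(x^{(i)}_h)-\tilde w^\pi(x^{(i)}_{h-1})K\pi_{h-1}(a^{(i)}_{h-1}\mid x^{(i)}_{h-1}))^2$, $\tilde w^\pi=(\hat d^\pi_{h-1}\wedge\mathsf d\hat d^D_{h-1})/\hat d^D_{h-1}$, and $\hat d^\pi_h:=\hat w^\pi_h\hat d^{D,\dagger}_{h-1}$; (4) $\tilde d^\pi_h:=\langle\mu^*_{h-1},\tilde\theta\rangle$ with $\tilde\theta\in\arg\min_{\theta}\|\langle\mu^*_{h-1},\theta\rangle-\hat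 d^\pi_h\|_1$. Clipped occupancy for this data: $d^D_{h}$ is the density of $x_h$ in the data $\mathcal D_h$ collected at iteration $h+1$, i.e. the uniform mixture $\frac1{|\Pi^{\rm expl}_h|}\sum_i d^{\pi^{h,i}}_h$; the data action policy is $\pi^D_h=\mathrm{unif}(\mathcal A)$; thresholds $C^{\mathbf x}_h=\mathsf d$, $C^{\mathbf a}_h=K$; $\bar\pi_h:=\pi_h\wedge K\pi^D_h$, $\bar d^\pi_0=d_0$, $\bar d^\pi_h:=\mathbf P^{\bar\pi}_{h-1}(\bar d^\pi_{h-1}\wedge\mathsf d\,d^D_{h-1})$. *)

(* Defs.v *)
From mathcomp Require Import all_boot all_order all_algebra.
From mathcomp Require Import all_classical all_reals all_analysis.
Set Implicit Arguments. Unset Strict Implicit. Unset Printing Implicit Defensive.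
Import Order.TTheory GRing.Theory Num.Theory.
Import numFieldNormedType.Exports.
Local Open Scope classical_set_scope.
Local Open Scope ring_scope.

(* Conventions.
   - States X : measurableType, densities are w.r.t. a reference measure lam ("dx").
   - Actions: a finite type A, K = #|A|.
   - Feature dimension dd ("d"); vectors in R^dd are functions 'I_dd -> R.
   - A Markov policy is  pi : nat -> X -> A -> R,  pi h x a = pi_h(a | x).
   - The finite policy class Pi is given by an index finType I and pol : I -> policy. *)

Definition policy (R : realType) (dX : measure_display) (X : measurableType dX)
  (A : finType) := nat -> X -> A -> R.

Definition L1dist (R : realType) (dX : measure_display) (X : measurableType dX)
  (lam : {measure set X -> \bar R}) (f g : X -> R) : \bar R :=
  (\int[lam]_x (`|f x - g x|)%:E)%E.

Definition is_density (R : realType) (dX : measure_display) (X : measurableType dX)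
  (lam : {measure set X -> \bar R}) (f : X -> R) : Prop :=
  measurable_fun setT f /\ (forall x, 0 <= f x) /\ ((\int[lam]_x (f x)%:E) = 1)%E.

Definition lowrank (R : realType) (X : Type) (dd : nat)
  (m : X -> 'I_dd -> R) (th : 'I_dd -> R) : X -> R :=
  fun x => \sum_j m x j * th j.

Definition Ptrans (R : realType) (X : Type) (A : Type) (dd : nat)
  (phi : nat -> X -> A -> 'I_dd -> R) (mu : nat -> X -> 'I_dd -> R)
  (h : nat) (x : X) (a : A) (x' : X) : R :=
  \sum_j phi h x a j * mu h x' j.

Definition Pop (R : realType) (dX : measure_display) (X : measurableType dX)
  (lam : {measure set X -> \bar R}) (A : finType) (dd : nat)
  (phi : nat -> X -> A -> 'I_dd -> R) (mu : nat -> X -> 'I_dd -> R)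
  (pi : policy R X A) (h : nat) (d : X -> R) : X -> R :=
  fun x' => \int[lam]_x (\sum_a Ptrans phi mu h x a x' * pi h x a * d x).

Fixpoint occ (R : realType) (dX : measure_display) (X : measurableType dX)
  (lam : {measure set X -> \bar R}) (A : finType) (dd : nat)
  (phi : nat -> X -> A -> 'I_dd -> R) (mu : nat -> X -> 'I_dd -> R)
  (d0 : X -> R) (pi : policy R X A) (h : nat) : X -> R :=
  match h with
  | 0 => d0
  | h'.+1 => Pop lam phi mu pi h' (occ lam phi mu d0 pi h')
  end.

Definition lowrank_MDP (R : realType) (dX : measure_display) (X : measurableType dX)
  (lam : {measure set X -> \bar R}) (A : finType) (dd : nat)
  (phi : nat -> X -> A -> 'I_dd -> R) (mu : nat -> X -> 'I_dd -> R)
  (Bmu : R) (d0 : X -> R) : Prop :=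
  [/\ (forall h a j, measurable_fun setT (fun x => phi h x a j)) /\
      (forall h j, measurable_fun setT (fun x => mu h x j)),
      forall h x a j, `|phi h x a j| <= 1,
      forall h, ((\int[lam]_x (\sum_j `|mu h x j|)%:E) <= Bmu%:E)%E,
      (forall h x a x', 0 <= Ptrans phi mu h x a x') /\
      (forall h x a, ((\int[lam]_x' (Ptrans phi mu h x a x')%:E) = 1)%E)
    & is_density lam d0].

Definition markov_policy (R : realType) (dX : measure_display) (X : measurableType dX)
  (A : finType) (pi : policy R X A) : Prop :=
  [/\ forall h x a, 0 <= pi h x a,
      forall h x, \sum_a pi h x a = 1
    & forall h a, measurable_fun setT (fun x => pi h x a)].

(* S : I -> (X -> R) is the family {tilde d^pi}_{pi in Pi};
   s : 'I_m -> I lists the chosen policies (repetitions allowed).  The set of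
   functions {S (s k)} is a barycentric spanner of {S i}: the distinct functions
   among them are linearly independent (so their number is the dimension of the
   span), and every S i is a linear combination of these distinct functions with
   coefficients in [-1,1] (coefficients are put on first occurrences only). *)
Definition bary_spanner (R : realType) (X : Type) (I : finType) (m : nat)
  (S : I -> X -> R) (s : 'I_m -> I) : Prop :=
  (forall i : I, exists c : 'I_m -> R,
      [/\ forall k, -1 <= c k <= 1,
          forall k k' : 'I_m, (k' < k)%N -> S (s k') = S (s k) -> c k = 0
        & S i = (fun x => \sum_k c k * S (s k) x)])
  /\
  (forall c : 'I_m -> R, (forall x, \sum_k c k * S (s k) x = 0) ->
     forall k, \sum_(k' | `[< S (s k') = S (s k) >]) c k' = 0).

Definition expl_set (I : finType) (dd : nat) (expl : nat -> 'I_dd -> I) (h : nat)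
  : {set I} := [set expl h k | k : 'I_dd].

Definition dData (R : realType) (dX : measure_display) (X : measurableType dX)
  (lam : {measure set X -> \bar R}) (A : finType) (dd : nat)
  (phi : nat -> X -> A -> 'I_dd -> R) (mu : nat -> X -> 'I_dd -> R)
  (d0 : X -> R) (I : finType) (pol : I -> policy R X A)
  (expl : nat -> 'I_dd -> I) (h : nat) : X -> R :=
  fun x => (#|expl_set expl h|%:R)^-1 *
           \sum_(p in expl_set expl h) occ lam phi mu d0 (pol p) h x.

(* bar pi_h = pi_h /\ K * pi^D_h with pi^D = unif(A) *)
Definition clip_pol (R : realType) (dX : measure_display) (X : measurableType dX)
  (A : finType) (pi : policy R X A) : policy R X A :=
  fun h x a => Num.min (pi h x a) (#|A|%:R * (#|A|%:R)^-1).

Fixpoint dbar (R : realType) (dX : measure_display) (X : measurableType dX)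
  (lam : {measure set X -> \bar R}) (A : finType) (dd : nat)
  (phi : nat -> X -> A -> 'I_dd -> R) (mu : nat -> X -> 'I_dd -> R)
  (d0 : X -> R) (I : finType) (pol : I -> policy R X A)
  (expl : nat -> 'I_dd -> I) (pi : policy R X A) (h : nat) : X -> R :=
  match h with
  | 0 => d0
  | h'.+1 => Pop lam phi mu (clip_pol pi) h'
      (fun x => Num.min (dbar lam phi mu d0 pol expl pi h' x)
                        (dd%:R * dData lam phi mu d0 pol expl h' x))
  end.

(* F_h = { <mu_{h-1}, theta> in Delta(X) : ||theta||_oo <= 1 };  F_0 := {d_0}
   (d_0 is known and hat d_0 = d_0). *)
Definition Fclass (R : realType) (dX : measure_display) (X : measurableType dX)
  (lam : {measure set X -> \bar R}) (dd : nat) (mu : nat -> X -> 'I_dd -> R)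
  (d0 : X -> R) (h : nat) : set (X -> R) :=
  match h with
  | 0 => [set d0]
  | h'.+1 => [set f | exists th : 'I_dd -> R,
               [/\ forall j, `|th j| <= 1, f = lowrank (mu h') th & is_density lam f]]
  end.

Definition Wclass (R : realType) (X : Type) (A : finType) (dd : nat)
  (mu : nat -> X -> 'I_dd -> R) (h : nat) : set (X -> R) :=
  [set w | exists thu thd : 'I_dd -> R,
     w = (fun x => lowrank (mu h.-1) thu x / lowrank (mu h.-1) thd x) /\
     forall x, `|w x| <= dd%:R * #|A|%:R].

Definition loglik (R : realType) (X : Type) (f : X -> R) (xs : seq X) : \bar R :=
  (\sum_(x <- xs) (if (0 < f x)%R then (ln (f x))%:E else -oo))%E.

(* One run of FORCE (input Pi = pol, mu, n_mle, n_reg), for arbitrary realized data.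
   Level indexing: Dmle h, Dreg h are the n_mle / n_reg tuples (x_h, a_h, x_{h+1})
   collected at iteration h+1; expl h k = pi^{h,k}; hatdD h = hat d^D_h,
   hatdDdag h = hat d^{D,dagger}_h; hatw h p = hat w^p_h; hatd h p = hat d^p_h;
   tild h p = tilde d^p_h. *)
Definition FORCE_run (R : realType) (dX : measure_display) (X : measurableType dX)
  (lam : {measure set X -> \bar R}) (A : finType) (I : finType) (H dd : nat)
  (mu : nat -> X -> 'I_dd -> R) (d0 : X -> R) (pol : I -> policy R X A)
  (nmle nreg : nat) (Dmle Dreg : nat -> seq ((X * A) * X))
  (expl : nat -> 'I_dd -> I) (hatd tild : nat -> I -> X -> R)
  (hatdD hatdDdag : nat -> X -> R) (hatw : nat -> I -> X -> R) : Prop :=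
  [/\
      (forall p, hatd 0 p = d0 /\ tild 0 p = d0) /\
      (forall h, (h < H)%N -> bary_spanner (fun p => tild h p) (expl h)),
      forall h, (h < H)%N -> size (Dmle h) = nmle /\ size (Dreg h) = nreg,
      forall h, (h < H)%N ->
        (Fclass lam mu d0 h (hatdD h) /\
         forall f, Fclass lam mu d0 h f ->
           (loglik f [seq t.1.1 | t <- Dmle h]
              <= loglik (hatdD h) [seq t.1.1 | t <- Dmle h])%E) /\
        (Fclass lam mu d0 h.+1 (hatdDdag h) /\
         forall f, Fclass lam mu d0 h.+1 f ->
           (loglik f [seq t.2 | t <- Dmle h]
              <= loglik (hatdDdag h) [seq t.2 | t <- Dmle h])%E),
      forall h p, (h < H)%N ->
        let tw := fun x => Num.min (hatd h p x) (dd%:R * hatdD h x) / hatdD h x in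
        let loss := fun w : X -> R =>
          \sum_(t <- Dreg h) (w t.2 - tw t.1.1 * #|A|%:R * pol p h t.1.1 t.1.2) ^+ 2 in
        [/\ Wclass A mu h.+1 (hatw h.+1 p),
            forall w, Wclass A mu h.+1 w -> loss (hatw h.+1 p) <= loss w
          & hatd h.+1 p = (fun x => hatw h.+1 p x * hatdDdag h x)]
    &
      forall h p, (h < H)%N ->
        exists th : 'I_dd -> R,
          tild h.+1 p = lowrank (mu h) th /\
          forall th' : 'I_dd -> R,
            (L1dist lam (lowrank (mu h) th) (hatd h.+1 p)
               <= L1dist lam (lowrank (mu h) th') (hatd h.+1 p))%E].

(* Main.v *)
From HB Require Import structures.
Require Import Defs.
From mathcomp Require Import all_boot all_order all_algebra.
From mathcomp Require Import all_classical all_reals all_analysis.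
From mathcomp Require Import measurable_realfun.
From mathcomp Require Import ring lra.
Set Implicit Arguments. Unset Strict Implicit. Unset Printing Implicit Defensive.
Import Order.TTheory GRing.Theory Num.Theory.
Local Open Scope classical_set_scope.
Local Open Scope ring_scope.

Section Tonelli.
Context (R : realType) (dX : measure_display) (X : measurableType dX)
  (lam : {measure set X -> \bar R}) (lamsf : sigma_finite setT lam).
Let lam' : set X -> \bar R := lam.
HB.instance Definition _ := Measure.on lam'.
HB.instance Definition _ := @Measure_isSigmaFinite.Build _ _ _ lam' lamsf.
Lemma tonelli_lam (f : (X * X)%type -> \bar R) : measurable_fun setT f ->
  (forall z, 0 <= f z)%E ->
  (\int[lam]_x \int[lam]_y f (x, y) = \int[lam]_y \int[lam]_x f (x, y))%E.
Proof. move=> mf f0. exact: (@fubini_tonelli _ _ _ _ _ lam' lam' f mf f0). Qed.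
Lemma tonelli_measG (f : (X * X)%type -> \bar R) : measurable_fun setT f ->
  (forall z, 0 <= f z)%E ->
  measurable_fun setT (fun y => \int[lam]_x f (x, y))%E.
Proof. move=> mf f0. exact: (@measurable_fun_fubini_tonelli_G _ _ _ _ _ lam' f mf f0). Qed.
End Tonelli.

Lemma measurable_inv (R : realType) : measurable_fun setT (@GRing.inv R).
Proof.
have -> : [set: R] = [set x | x != 0] `|` [set 0].
  by apply/seteqP; split => x //= _; case: (eqVneq x 0); [right|left].
apply/measurable_funU => //.
  by apply: open_measurable; exact: open_neq.
split; last exact: measurable_fun_set1.
apply: open_continuous_measurable_fun; first exact: open_neq.
by move=> x; rewrite inE => x0; exact: inv_continuous.
Qed.

Section Gen.
Context (R : realType) (dX : measure_display) (X : measurableType dX)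
  (lam : {measure set X -> \bar R}).

Implicit Types (u v f g : X -> R).
Definition good (u : X -> R) := lam.-integrable setT (EFin \o u).

Lemma good_meas u : good u -> measurable_fun setT u.
Proof. by move=> /measurable_int /measurable_EFinP. Qed.

Lemma good_le u v : measurable_fun setT u -> (forall x, `|u x| <= v x) ->
  good v -> good u.
Proof.
move=> mu uv gv; apply: (le_integrable measurableT _ _ gv) => //.
  exact/measurable_EFinP.
move=> x _ /=; rewrite lee_fin (le_trans (uv x))//.
exact: ler_norm.
Qed.

Lemma good_abs u : good u -> good (fun x => `|u x|).
Proof.
move=> gu; apply: (@good_le _ (fun x => `|u x|)).
- exact/measurableT_comp/good_meas.
- by move=> x; rewrite normr_id.
- have := integrable_norm gu.
  by apply: eq_integrable => // x _.
Qed.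

Lemma good_add u v : good u -> good v -> good (fun x => u x + v x).
Proof.
move=> gu gv; have := integrableD measurableT gu gv.
by apply: eq_integrable => // x _ /=; rewrite EFinD.
Qed.

Lemma good_opp u : good u -> good (fun x => - u x).
Proof.
move=> gu; have := integrableN gu.
by apply: eq_integrable => // x _ /=.
Qed.

Lemma good_sub u v : good u -> good v -> good (fun x => u x - v x).
Proof. by move=> gu gv; apply: good_add => //; exact: good_opp. Qed.

Lemma good_scale (k : R) u : good u -> good (fun x => k * u x).
Proof.
move=> gu; have := integrableZl measurableT k gu.
by apply: eq_integrable => // x _ /=; rewrite EFinM.
Qed.

Lemma good_sum (I : Type) (s : seq I) (P : pred I) (F : I -> X -> R) :
  (forall i, good (F i)) -> good (fun x => \sum_(i <- s | P i) F i x).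
Proof.
move=> gF; have := integrable_sum (mu := lam) measurableT s (P := P)
  (h := fun i x => (F i x)%:E) (fun i _ => gF i).
by apply: eq_integrable => // x _ /=; rewrite sumEFin.
Qed.

Lemma good_min u v : good u -> good v -> good (fun x => Num.min (u x) (v x)).
Proof.
move=> gu gv; apply: (@good_le _ (fun x => `|u x| + `|v x|)).
- by apply: measurable_minr; exact: good_meas.
- move=> x; rewrite /Num.min; case: ifP => _.
    by rewrite lerDl.
  by rewrite lerDr.
- by apply: good_add; exact: good_abs.
Qed.



Lemma mfst (f : X -> R) : measurable_fun setT f ->
  measurable_fun setT (fun z : (X*X)%type => f z.1).
Proof. move=> mf. exact: (measurableT_comp mf measurable_fst). Qed.
Lemma msnd (f : X -> R) : measurable_fun setT f ->
  measurable_fun setT (fun z : (X*X)%type => f z.2).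
Proof. move=> mf. exact: (measurableT_comp mf measurable_snd). Qed.
Lemma mabs (f : X -> R) : measurable_fun setT f ->
  measurable_fun setT (fun z => `|f z|).
Proof. by move=> mf; apply: measurableT_comp. Qed.
Lemma good_sumF (I : finType) (F : I -> X -> R) :
  (forall i, good (F i)) -> good (fun x => \sum_i F i x).
Proof. by move=> gF; have := @good_sum _ (index_enum I) xpredT F gF. Qed.
Lemma Rintegral_sumT (I : Type) (s : seq I) (F : I -> X -> R) :
  (forall i, good (F i)) ->
  \int[lam]_x (\sum_(i <- s) F i x) = \sum_(i <- s) \int[lam]_x F i x.
Proof.
move=> gF; elim: s => [|i s ih].
  under eq_Rintegral do rewrite big_nil.
  by rewrite Rintegral_cst // mul0r big_nil.
under eq_Rintegral do rewrite big_cons.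
rewrite RintegralD //; first by rewrite ih big_cons.
  exact: gF.
exact: (@good_sum _ s xpredT F gF).
Qed.

Lemma L1_ge0 f g : (0 <= L1dist lam f g)%E.
Proof. by apply: integral_ge0 => x _; rewrite lee_fin. Qed.

End Gen.

Section Core.
Context (R : realType) (dX : measure_display) (X : measurableType dX)
  (lam : {measure set X -> \bar R}) (lamsf : sigma_finite setT lam)
  (A : finType) (dd : nat) (phi : nat -> X -> A -> 'I_dd -> R)
  (mu : nat -> X -> 'I_dd -> R).
Hypothesis mphi : forall h a j, measurable_fun setT (fun x => phi h x a j).
Hypothesis mmu : forall h j, measurable_fun setT (fun x => mu h x j).
Hypothesis phi1 : forall h x a j, `|phi h x a j| <= 1.
Hypothesis Pge0 : forall h x a x', 0 <= Ptrans phi mu h x a x'.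
Hypothesis P1 : forall h x a, (\int[lam]_x' (Ptrans phi mu h x a x')%:E = 1)%E.
Variable pi : policy R X A.
Hypothesis pi0 : forall h x a, 0 <= pi h x a.
Hypothesis pi1 : forall h x, \sum_a pi h x a = 1.
Hypothesis mpi : forall h a, measurable_fun setT (fun x => pi h x a).

Implicit Types (u v : X -> R).
Local Hint Resolve pi0 Pge0 : core.

Lemma pi_le1 h x a : pi h x a <= 1.
Proof.
rewrite -(pi1 h x) (bigD1 a) //= lerDl sumr_ge0 // => b _.
Qed.

Lemma mP n a x' : measurable_fun setT (fun x => Ptrans phi mu n x a x').
Proof.
rewrite /Ptrans; apply: measurable_sum => j.
by apply: measurable_funM => //; exact: measurable_cst.
Qed.

Lemma mP' n a x : measurable_fun setT (fun x' => Ptrans phi mu n x a x').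
Proof.
rewrite /Ptrans; apply: measurable_sum => j.
by apply: measurable_funM => //; exact: measurable_cst.
Qed.

Lemma Ptrans_bound n x a x' : `|Ptrans phi mu n x a x'| <= \sum_j `|mu n x' j|.
Proof.
rewrite /Ptrans (le_trans (ler_norm_sum _ _ _)) // ler_sum // => j _.
rewrite normrM -[X in _ <= X]mul1r ler_wpM2r //.
Qed.

Definition Gi n u x' x := \sum_a Ptrans phi mu n x a x' * pi n x a * u x.

Lemma mGi n u x' : measurable_fun setT u -> measurable_fun setT (Gi n u x').
Proof.
move=> mu'; rewrite /Gi; apply: measurable_sum => a.
apply: measurable_funM => //; apply: measurable_funM => //.
exact: mP.
Qed.

Lemma Gi_bound n u x' x :
  `|Gi n u x' x| <= \sum_(a : A) ((\sum_j `|mu n x' j|) * `|u x|).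
Proof.
rewrite /Gi (le_trans (ler_norm_sum _ _ _)) // ler_sum // => a _.
rewrite !normrM -mulrA; apply: ler_pM => //.
- exact: Ptrans_bound.
- rewrite -[X in _ <= X]mul1r; apply: ler_wpM2r => //.
  by rewrite ger0_norm // pi_le1.
Qed.

Lemma good_Gi n u x' : good lam u -> good lam (Gi n u x').
Proof.
move=> gu; apply: (good_le (v := fun x => \sum_(a : A) ((\sum_j `|mu n x' j|) * `|u x|))).
- exact: (mGi _ _ (good_meas gu)).
- exact: Gi_bound.
- apply: good_sumF => a; apply: good_scale; exact: good_abs.
Qed.


Definition coefP n u j := \int[lam]_x (\sum_a phi n x a j * pi n x a * u x).

Lemma good_coefP n u j : good lam u ->
  good lam (fun x => \sum_a phi n x a j * pi n x a * u x).
Proof.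
move=> gu; apply: (good_le (v := fun x => \sum_(a : A) `|u x|)).
- apply: measurable_sum => a; apply: measurable_funM; last exact: good_meas gu.
  exact: measurable_funM.
- move=> x; rewrite (le_trans (ler_norm_sum _ _ _)) // ler_sum // => a _.
  rewrite !normrM -[X in _ <= X]mul1r ler_wpM2r //.
  by apply: mulr_ile1 => //; rewrite ger0_norm // pi_le1.
- by apply: good_sumF => a; exact: good_abs.
Qed.

Lemma Pop_lin n u : good lam u ->
  Pop lam phi mu pi n u = lowrank (mu n) (coefP n u).
Proof.
move=> gu; apply: funext => x'; rewrite /Pop /lowrank /coefP.
transitivity (\int[lam]_x \sum_j (mu n x' j * (\sum_a phi n x a j * pi n x a * u x))).
  apply: eq_Rintegral => x _; rewrite /Ptrans.
  under eq_bigr do rewrite !mulr_suml.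
  rewrite exchange_big; apply: eq_bigr => j _; rewrite mulr_sumr.
  by apply: eq_bigr => a _; ring.
rewrite Rintegral_sumT; last first.
  by move=> j; apply: good_scale; exact: good_coefP.
apply: eq_bigr => j _; rewrite RintegralZl //.
exact: good_coefP.
Qed.

Lemma Pop_meas n u : good lam u -> measurable_fun setT (Pop lam phi mu pi n u).
Proof.
move=> gu; rewrite Pop_lin // /lowrank; apply: measurable_sum => j.
by apply: measurable_funM => //; exact: measurable_cst.
Qed.

Lemma Pop_L1 n u : good lam u ->
  (\int[lam]_x' (`|Pop lam phi mu pi n u x'|)%:E <= \int[lam]_x (`|u x|)%:E)%E.
Proof.
move=> gu; have mu' := good_meas gu.
pose K := fun z : (X * X)%type =>
  (\sum_a Ptrans phi mu n z.1 a z.2 * pi n z.1 a * `|u z.1|)%:E.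
have mK : measurable_fun setT K.
  apply/measurable_EFinP; apply: measurable_sum => a.
  apply: measurable_funM; last first.
    exact: (mfst (mabs mu')).
  apply: measurable_funM; last exact: (mfst (mpi n a)).
  rewrite /Ptrans; apply: measurable_sum => j; apply: measurable_funM.
    exact: (mfst (mphi n a j)).
  exact: (msnd (mmu n j)).
have K0 : forall z, (0 <= K z)%E.
  move=> z; rewrite lee_fin sumr_ge0 // => a _.
  by rewrite !mulr_ge0.
apply: (@le_trans _ _ (\int[lam]_x' \int[lam]_x K (x, x'))%E).
  apply: ge0_le_integral.
  - exact: measurableT.
  - by move=> x' _; rewrite lee_fin.
  - apply/measurable_EFinP; apply: mabs; exact: Pop_meas.
  - exact: tonelli_measG.
  move=> x' _; rewrite /Pop.
  have gG := good_Gi n x' gu.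
  have := le_normr_Rintegral measurableT gG; rewrite -lee_fin => /le_trans; apply.
  rewrite /Rintegral fineK; last first.
    by apply: integrable_fin_num => //; exact: good_abs.
  apply: ge0_le_integral.
  - exact: measurableT.
  - by move=> x _; rewrite lee_fin.
  - by apply/measurable_EFinP; apply: mabs; exact: mGi.
  - by apply/measurable_EFinP; exact: (mGi n x' (mabs mu')).
  move=> x _; rewrite lee_fin /Gi /K /=.
  rewrite (le_trans (ler_norm_sum _ _ _)) // ler_sum // => a _.
  by rewrite !normrM (ger0_norm (Pge0 _ _ _ _)) (ger0_norm (pi0 _ _ _)).
rewrite -tonelli_lam //.
suff -> : (\int[lam]_x \int[lam]_y K (x, y) = \int[lam]_x (`|u x|)%:E)%E by [].
apply: eq_integral => x _.
rewrite /K /=.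
under eq_integral do rewrite -sumEFin.
have hm : forall a, measurable_fun setT
    (fun x' => (Ptrans phi mu n x a x' * pi n x a * `|u x|)%:E).
  move=> a; apply/measurable_EFinP; apply: measurable_funM => //.
  apply: measurable_funM => //; exact: mP'.
have h0 : forall a x', setT x' ->
    (0 <= (Ptrans phi mu n x a x' * pi n x a * `|u x|)%:E)%E.
  by move=> a x' _; rewrite lee_fin !mulr_ge0.
rewrite (ge0_integral_sum lam measurableT hm h0).
have e : forall a, (\int[lam]_x' (Ptrans phi mu n x a x' * pi n x a * `|u x|)%:E
    = (pi n x a * `|u x|)%:E)%E.
  move=> a; under eq_integral do rewrite -mulrA mulrC EFinM.
  have mPa : measurable_fun setT (fun x' => (Ptrans phi mu n x a x')%:E).
    exact/measurable_EFinP/mP'.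
  rewrite (ge0_integralZl lam measurableT mPa).
  - by rewrite P1 mule1.
  - by move=> x' _; rewrite lee_fin.
  - by rewrite lee_fin mulr_ge0.
under eq_bigr do rewrite e.
rewrite sumEFin -mulr_suml pi1 mul1r //.
Qed.

Lemma Pop_good n u : good lam u -> good lam (Pop lam phi mu pi n u).
Proof.
move=> gu; apply/integrableP; split.
  by apply/measurable_EFinP; exact: Pop_meas.
apply: (le_lt_trans (Pop_L1 n gu)).
by case/integrableP: gu.
Qed.

Lemma Pop_B n u v x' : good lam u -> good lam v ->
  Pop lam phi mu pi n u x' - Pop lam phi mu pi n v x' =
  Pop lam phi mu pi n (fun x => u x - v x) x'.
Proof.
move=> gu gv; rewrite /Pop -RintegralB //; last 2 first.
- exact: (good_Gi n x' gu).
- exact: (good_Gi n x' gv).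
apply: eq_Rintegral => x _; rewrite -sumrB; apply: eq_bigr => a _; ring.
Qed.

Lemma Pop_ge0 n u x' : (forall x, 0 <= u x) -> 0 <= Pop lam phi mu pi n u x'.
Proof.
move=> u0; apply: Rintegral_ge0 => x _; apply: sumr_ge0 => a _.
by rewrite !mulr_ge0.
Qed.

Lemma Pop_le n u v x' : good lam u -> good lam v -> (forall x, u x <= v x) ->
  Pop lam phi mu pi n u x' <= Pop lam phi mu pi n v x'.
Proof.
move=> gu gv uv; apply: le_Rintegral => //.
- exact: (good_Gi n x' gu).
- exact: (good_Gi n x' gv).
move=> x _; apply: ler_sum => a _; apply: ler_wpM2l => //.
by rewrite mulr_ge0.
Qed.
End Core.

Section Main.
Context (R : realType) (dX : measure_display) (X : measurableType dX)
  (lam : {measure set X -> \bar R}) (lamsf : sigma_finite setT lam)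
  (A : finType) (I : finType) (dd : nat) (phi : nat -> X -> A -> 'I_dd -> R)
  (mu : nat -> X -> 'I_dd -> R) (d0 : X -> R) (pol : I -> policy R X A)
  (expl : nat -> 'I_dd -> I).
Hypothesis mphi : forall h a j, measurable_fun setT (fun x => phi h x a j).
Hypothesis mmu : forall h j, measurable_fun setT (fun x => mu h x j).
Hypothesis phi1 : forall h x a j, `|phi h x a j| <= 1.
Hypothesis Pge0 : forall h x a x', 0 <= Ptrans phi mu h x a x'.
Hypothesis P1 : forall h x a, (\int[lam]_x' (Ptrans phi mu h x a x')%:E = 1)%E.
Hypothesis d0d : is_density lam d0.
Hypothesis polM : forall p, markov_policy (pol p).
Hypothesis AK : (0 < #|A|)%N.

Lemma clip_id q : clip_pol (pol q) = pol q.
Proof.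
have [p0 p1 _] := polM q.
apply/funext => h; apply/funext => x; apply/funext => a.
rewrite /clip_pol mulfV ?pnatr_eq0 -?lt0n //.
by rewrite min_l //; exact: (pi_le1 p0 p1 h x a).
Qed.

Lemma d0_good : good lam d0 /\ (forall x, 0 <= d0 x).
Proof.
case: d0d => md0 [d00 d01]; split => //.
apply/integrableP; split; first exact/measurable_EFinP.
rewrite (eq_integral (fun x => (d0 x)%:E)); first by rewrite d01 ltry.
by move=> x _ /=; rewrite ger0_norm.
Qed.

Lemma occ_good q n : good lam (occ lam phi mu d0 (pol q) n) /\
  (forall x, 0 <= occ lam phi mu d0 (pol q) n x).
Proof.
have [p0 p1 mp] := polM q.
elim: n => [|n [gn pn]] /=; first exact: d0_good.
split.
  exact: (Pop_good lamsf mphi mmu phi1 Pge0 P1 p0 p1 mp).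
by move=> x; exact: (Pop_ge0 lam Pge0 p0).
Qed.

Lemma dD_good n : good lam (dData lam phi mu d0 pol expl n) /\
  (forall x, 0 <= dData lam phi mu d0 pol expl n x).
Proof.
rewrite /dData; split.
  apply: good_scale.
  exact: (@good_sum _ _ _ _ _ (index_enum I) (fun p => p \in expl_set expl n)
           (fun p => occ lam phi mu d0 (pol p) n) (fun p => (occ_good p n).1)).
move=> x; rewrite mulr_ge0 // ?invr_ge0 // sumr_ge0 // => p _.
exact: (occ_good p n).2.
Qed.

Definition gclip q n := fun x =>
  Num.min (dbar lam phi mu d0 pol expl (pol q) n x)
          (dd%:R * dData lam phi mu d0 pol expl n x).

Lemma dbar_good q n : [/\ good lam (dbar lam phi mu d0 pol expl (pol q) n),
  (forall x, 0 <= dbar lam phi mu d0 pol expl (pol q) n x) &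
  (forall x, dbar lam phi mu d0 pol expl (pol q) n x <= occ lam phi mu d0 (pol q) n x)].
Proof.
have [p0 p1 mp] := polM q.
elim: n => [|n [gn pn on]] /=.
  by split => //; [exact: d0_good.1 | exact: d0_good.2].
rewrite clip_id.
have gg : good lam (gclip q n).
  apply: good_min => //; apply: good_scale; exact: (dD_good n).1.
have g0 : forall x, 0 <= gclip q n x.
  move=> x; rewrite /gclip le_min pn /= mulr_ge0 //; exact: (dD_good n).2.
have go : forall x, gclip q n x <= occ lam phi mu d0 (pol q) n x.
  by move=> x; rewrite /gclip ge_min on.
split.
- exact: (Pop_good lamsf mphi mmu phi1 Pge0 P1 p0 p1 mp n gg).
- by move=> x; exact: (Pop_ge0 lam Pge0 p0 n x g0).
- move=> x; apply: (Pop_le mphi phi1 Pge0 p0 p1 mp n x gg) => //.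
  exact: (occ_good q n).1.
Qed.

End Main.

Section Main.
Context (R : realType) (dX : measure_display) (X : measurableType dX)
  (lam : {measure set X -> \bar R}) (lamsf : sigma_finite setT lam)
  (A : finType) (I : finType) (dd : nat) (phi : nat -> X -> A -> 'I_dd -> R)
  (mu : nat -> X -> 'I_dd -> R) (d0 : X -> R) (pol : I -> policy R X A)
  (expl : nat -> 'I_dd -> I).
Hypothesis mphi : forall h a j, measurable_fun setT (fun x => phi h x a j).
Hypothesis mmu : forall h j, measurable_fun setT (fun x => mu h x j).
Hypothesis phi1 : forall h x a j, `|phi h x a j| <= 1.
Hypothesis Pge0 : forall h x a x', 0 <= Ptrans phi mu h x a x'.
Hypothesis P1 : forall h x a, (\int[lam]_x' (Ptrans phi mu h x a x')%:E = 1)%E.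
Hypothesis d0d : is_density lam d0.
Hypothesis polM : forall p, markov_policy (pol p).
Hypothesis AK : (0 < #|A|)%N.

Hypothesis ddpos : (0 < dd)%N.

Lemma pointwise_E m (tild : nat -> I -> X -> R) p x :
  bary_spanner (fun q => tild m q) (expl m) ->
  dbar lam phi mu d0 pol expl (pol p) m x - gclip lam phi mu d0 pol expl p m x <=
  `|dbar lam phi mu d0 pol expl (pol p) m x - tild m p x| +
  \sum_k `|tild m (expl m k) x - dbar lam phi mu d0 pol expl (pol (expl m k)) m x|.
Proof.
move=> [bary1 _].
set s := expl m.
set db := fun q => dbar lam phi mu d0 pol expl (pol q) m x.
set t := fun q => tild m q x.
set D := dData lam phi mu d0 pol expl m x.
have db0 : forall q, 0 <= db q.
  move=> q; have [_ h _] := dbar_good lamsf expl mphi mmu phi1 Pge0 P1 d0d polM AK q m; exact: h.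
have dbo : forall q, db q <= occ lam phi mu d0 (pol q) m x.
  move=> q; have [_ _ h] := dbar_good lamsf expl mphi mmu phi1 Pge0 P1 d0d polM AK q m; exact: h.
have S0 : 0 <= \sum_k `|t (s k) - db (s k)| by apply: sumr_ge0.
rewrite /gclip -/(db p) -/D.
have [hle|hlt] := leP (db p) (dd%:R * D).
  by rewrite subrr; apply: addr_ge0 => //; exact: S0.
have [c [cb cz ceq]] := bary1 p.
have tp : t p = \sum_k c k * t (s k) by rewrite /t ceq.
pose F := fun k : 'I_dd => `[< forall k' : 'I_dd, (k' < k)%N -> tild m (s k') <> tild m (s k) >].
have cF : forall k, ~~ F k -> c k = 0.
  move=> k /asboolPn /existsNP [k' /not_implyP [lt /contrapT eq]].
  exact: (cz k k' lt eq).
have h1 : t p <= \sum_(k | F k) `|t (s k)|.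
  rewrite tp (le_trans (ler_norm _)) // (le_trans (ler_norm_sum _ _ _)) //.
  rewrite [X in _ <= X]big_mkcond /=; apply: ler_sum => k _.
  case: ifPn => Fk.
    rewrite normrM -[X in _ <= X]mul1r ler_wpM2r //.
    by rewrite ler_norml; case/andP: (cb k) => -> ->.
  by rewrite cF // mul0r normr0.
have h2 : \sum_(k | F k) `|t (s k)| <=
    \sum_(k | F k) db (s k) + \sum_k `|t (s k) - db (s k)|.
  apply: (@le_trans _ _ (\sum_(k | F k) (db (s k) + `|t (s k) - db (s k)|))).
    apply: ler_sum => k _.
    have -> : t (s k) = db (s k) + (t (s k) - db (s k)) by ring.
    by rewrite (le_trans (ler_normD _ _)) // ger0_norm // addrAC subrr add0r.
  rewrite big_split /= lerD2l [X in _ <= X]big_mkcond /=.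
  rewrite [X in X <= _]big_mkcond /=; apply: ler_sum => k _.
  by case: ifPn.
have h3 : \sum_(k | F k) db (s k) <= dd%:R * D.
  set E := expl_set expl m.
  have injF : {in [set k | F k]%SET &, injective s}.
    move=> k1 k2; rewrite !inE => F1 F2 e.
    case: (ltngtP k1 k2) => [lt|lt|/val_inj //].
      by move/asboolP: F2 => /(_ k1 lt); rewrite e.
    by move/asboolP: F1 => /(_ k2 lt); rewrite e.
  have -> : \sum_(k | F k) db (s k) = \sum_(q in s @: [set k | F k]%SET) db q.
    by rewrite big_imset //; apply: eq_bigl => k; rewrite inE.
  have sub : s @: [set k | F k]%SET \subset E.
    apply/fintype.subsetP => q /imsetP [k _ ->]; apply/imsetP; exists k => //.
  apply: (@le_trans _ _ (\sum_(q in E) db q)).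
    rewrite [X in _ <= X](big_setID (s @: [set k | F k]%SET)) /=.
    rewrite (finset.setIidPr sub) lerDl; apply: sumr_ge0 => q _; exact: db0.
  apply: (@le_trans _ _ (\sum_(q in E) occ lam phi mu d0 (pol q) m x)).
    by apply: ler_sum => q _; exact: dbo.
  have E0 : (0 < #|E|)%N.
    apply/card_gt0P; exists (s (Ordinal ddpos)); apply/imsetP.
    by exists (Ordinal ddpos).
  have Edd : (#|E| <= dd)%N.
    by have := leq_imset_card s 'I_dd; rewrite card_ord.
  rewrite /D /dData -/E mulrA; apply: ler_peMl.
    by apply: sumr_ge0 => q _; exact: (occ_good lamsf mphi mmu phi1 Pge0 P1 d0d polM q m).2.
  by rewrite -[_ * _^-1]/(_ / _) ler_pdivlMr ?ltr0n // mul1r ler_nat.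
have h4 : db p - t p <= `|db p - t p| by apply: ler_norm.
rewrite -/(t p); move: S0 h1 h2 h3 h4.
set S1 := \sum_(k | F k) `|t (s k)|.
set S2 := \sum_(k | F k) db (s k).
set S3 := \sum_k `|t (s k) - db (s k)|.
rewrite -/S3.
move=> *; lra.
Qed.

End Main.

Lemma L1_tri (R : realType) (dX : measure_display) (X : measurableType dX)
  (lam : {measure set X -> \bar R}) (a b c : X -> R) :
  measurable_fun setT a -> measurable_fun setT b -> measurable_fun setT c ->
  (L1dist lam a c <= L1dist lam a b + L1dist lam b c)%E.
Proof.
move=> ma mb mc; rewrite /L1dist -ge0_integralD //; last 2 first.
- by apply/measurable_EFinP; apply: mabs; exact: measurable_funB.
- by apply/measurable_EFinP; apply: mabs; exact: measurable_funB.
apply: ge0_le_integral => //.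
- by apply/measurable_EFinP; apply: mabs; exact: measurable_funB.
- apply/measurable_EFinP; apply: measurable_funD; apply: mabs; exact: measurable_funB.
move=> x _; rewrite lee_fin.
have -> : a x - c x = (a x - b x) + (b x - c x) by ring.
exact: ler_normD.
Qed.

Lemma L1_sym (R : realType) (dX : measure_display) (X : measurableType dX)
  (lam : {measure set X -> \bar R}) (a b : X -> R) :
  L1dist lam a b = L1dist lam b a.
Proof. by apply: eq_integral => x _; rewrite distrC. Qed.

Lemma lowrank_meas (R : realType) (dX : measure_display) (X : measurableType dX)
  (dd : nat) (m : X -> 'I_dd -> R) th :
  (forall j, measurable_fun setT (fun x => m x j)) ->
  measurable_fun setT (lowrank m th).
Proof.
move=> mm; rewrite /lowrank; apply: measurable_sum => j.
by apply: measurable_funM => //; exact: measurable_cst.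
Qed.

Lemma measurable_funV' (R : realType) (dX : measure_display) (X : measurableType dX)
  (f : X -> R) : measurable_fun setT f -> measurable_fun setT (fun x => (f x)^-1).
Proof.
move=> mf; have := measurableT_comp (@measurable_inv R) mf.
by apply: eq_measurable_fun => x _.
Qed.

Unset Implicit Arguments.
Theorem lemma2 (R : realType) (dX : measure_display) (X : measurableType dX)
  (lam : {measure set X -> \bar R}) (A : finType) (I : finType) (H dd : nat)
  (phi : nat -> X -> A -> 'I_dd -> R) (mu : nat -> X -> 'I_dd -> R)
  (Bmu : R) (d0 : X -> R) (pol : I -> policy R X A)
  (nmle nreg : nat) (Dmle Dreg : nat -> seq ((X * A) * X))
  (expl : nat -> 'I_dd -> I) (hatd tild : nat -> I -> X -> R)
  (hatdD hatdDdag : nat -> X -> R) (hatw : nat -> I -> X -> R) :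
  (0 < dd)%N -> (0 < #|A|)%N ->
  sigma_finite setT lam ->
  lowrank_MDP lam phi mu Bmu d0 ->
  (forall p, markov_policy (pol p)) ->
  FORCE_run lam H mu d0 pol nmle nreg Dmle Dreg expl hatd tild hatdD hatdDdag hatw ->
  forall (h : nat) (p : I), (1 <= h)%N -> (h <= H - 1)%N ->
    (L1dist lam (dbar lam phi mu d0 pol expl (pol p) h) (occ lam phi mu d0 (pol p) h)
     <= L1dist lam (dbar lam phi mu d0 pol expl (pol p) h.-1)
                   (occ lam phi mu d0 (pol p) h.-1)
        + (4 * dd%:R)%:E *
          \big[maxe/-oo]_(q : I)
             L1dist lam (hatd h.-1 q) (dbar lam phi mu d0 pol expl (pol q) h.-1))%E.
Proof.
move=> dpos AK lamsf [[mphi mmu] phi1 _ [Pge0 P1] d0d] polM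
  [[init bary] _ mle reg proj] h p h1 hH.
case: h h1 hH => [//|m] _ hH /=.
have mH : (m < H)%N := leq_trans hH (leq_subr 1 H).
have [md0 _] := d0d.
have gdb := dbar_good lamsf expl mphi mmu phi1 Pge0 P1 d0d polM AK.
have goc := occ_good lamsf mphi mmu phi1 Pge0 P1 d0d polM.
have gdD := dD_good lamsf expl mphi mmu phi1 Pge0 P1 d0d polM.
have mdb : forall q n, measurable_fun setT (dbar lam phi mu d0 pol expl (pol q) n).
  by move=> q n; case: (gdb q n) => g _ _; exact: good_meas g.
have moc : forall q n, measurable_fun setT (occ lam phi mu d0 (pol q) n).
  by move=> q n; exact: good_meas (goc q n).1.
have ggc : forall q n, good lam (gclip lam phi mu d0 pol expl q n).
  move=> q n; apply: good_min; first by case: (gdb q n).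
  by apply: good_scale; exact: (gdD n).1.
have mtild : forall q, measurable_fun setT (tild m q).
  move=> q; case: m mH {hH} => [|m'] mH.
    by rewrite (init q).2.
  have [th [-> _]] := proj m' q (ltnW mH).
  exact: lowrank_meas.
have mhat : forall q, measurable_fun setT (hatd m q).
  move=> q; case: m mH {hH mtild} => [|m'] mH.
    by rewrite (init q).1.
  have [[thu [thd [ew _]]] _ ->] := reg m' q (ltnW mH).
  have [_ [[th [_ e2 [md _]]] _]] := mle m' (ltnW mH).
  apply: measurable_funM => //; rewrite ew.
  apply: measurable_funM; first exact: lowrank_meas.
  apply: measurable_funV'; exact: lowrank_meas.
have T : forall q, (L1dist lam (tild m q) (dbar lam phi mu d0 pol expl (pol q) m) <=
    L1dist lam (hatd m q) (dbar lam phi mu d0 pol expl (pol q) m) +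
    L1dist lam (hatd m q) (dbar lam phi mu d0 pol expl (pol q) m))%E.
  move=> q; case: m mH {hH} mtild mhat => [|m'] mH mtild mhat.
    have -> : L1dist lam (tild 0 q) (dbar lam phi mu d0 pol expl (pol q) 0) = 0%E.
      rewrite (init q).2 /L1dist -(integral0 lam setT).
      by apply: eq_integral => x _ /=; rewrite subrr normr0.
    by apply: adde_ge0; exact: L1_ge0.
  apply: le_trans (L1_tri lam (mtild q) (mhat q) (mdb q m'.+1)) _.
  apply: leeD => //.
  have [th [et opt]] := proj m' q (ltnW mH).
  have [p0 p1 mp] := polM q.
  have edb : dbar lam phi mu d0 pol expl (pol q) m'.+1 =
      lowrank (mu m') (coefP lam phi (pol q) m' (gclip lam phi mu d0 pol expl q m')).
    rewrite /= clip_id //.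
    exact: (Pop_lin mu mphi phi1 p0 p1 mp m' (ggc q m')).
  rewrite et (L1_sym lam (hatd _ q)) edb.
  exact: opt.
set g := gclip lam phi mu d0 pol expl p m.
have [p0 p1 mp] := polM p.
have gg := ggc p m.
have gocp := (goc p m).1.
have gdbp : good lam (dbar lam phi mu d0 pol expl (pol p) m) by case: (gdb p m).
have mg : measurable_fun setT g := good_meas gg.
have gle : forall x, g x <= dbar lam phi mu d0 pol expl (pol p) m x.
  by move=> x; rewrite /g /gclip ge_min lexx.
have step1 : (L1dist lam (dbar lam phi mu d0 pol expl (pol p) m.+1)
                        (occ lam phi mu d0 (pol p) m.+1) <=
              \int[lam]_x (`|g x - occ lam phi mu d0 (pol p) m x|)%:E)%E.
  have e1 : dbar lam phi mu d0 pol expl (pol p) m.+1 = Pop lam phi mu (pol p) m g.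
    by rewrite /= clip_id.
  rewrite /L1dist e1 /=.
  rewrite (eq_integral (fun x' => (`|Pop lam phi mu (pol p) m
              (fun x => g x - occ lam phi mu d0 (pol p) m x) x'|)%:E)); last first.
    by move=> x' _; rewrite (Pop_B mu mphi phi1 p0 p1 mp m x' gg gocp).
  exact: (Pop_L1 lamsf mphi mmu phi1 Pge0 P1 p0 p1 mp m (good_sub gg gocp)).
have step2 : (\int[lam]_x (`|g x - occ lam phi mu d0 (pol p) m x|)%:E <=
    L1dist lam (dbar lam phi mu d0 pol expl (pol p) m) (occ lam phi mu d0 (pol p) m) +
    \int[lam]_x (dbar lam phi mu d0 pol expl (pol p) m x - g x)%:E)%E.
  have f10 : forall x, setT x -> (0 <= (`|dbar lam phi mu d0 pol expl (pol p) m x -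
      occ lam phi mu d0 (pol p) m x|)%:E)%E by move=> x _; rewrite lee_fin.
  have mf1 : measurable_fun setT (fun x => (`|dbar lam phi mu d0 pol expl (pol p) m x -
      occ lam phi mu d0 (pol p) m x|)%:E).
    by apply/measurable_EFinP; apply: mabs; exact: measurable_funB.
  have f20 : forall x, setT x ->
      (0 <= (dbar lam phi mu d0 pol expl (pol p) m x - g x)%:E)%E.
    by move=> x _; rewrite lee_fin subr_ge0.
  have mf2 : measurable_fun setT
      (fun x => (dbar lam phi mu d0 pol expl (pol p) m x - g x)%:E).
    by apply/measurable_EFinP; exact: measurable_funB.
  rewrite /L1dist -(ge0_integralD lam measurableT f10 mf1 f20 mf2).
  apply: ge0_le_integral => //.
  - by apply/measurable_EFinP; apply: mabs; exact: measurable_funB.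
  - apply/measurable_EFinP; apply: measurable_funD.
      by apply: mabs; exact: measurable_funB.
    exact: measurable_funB.
  move=> x _; rewrite lee_fin.
  set a := dbar lam phi mu d0 pol expl (pol p) m x.
  set o := occ lam phi mu d0 (pol p) m x.
  have := ler_normD (g x - a) (a - o).
  have -> : g x - a + (a - o) = g x - o by ring.
  rewrite (ler0_norm (_ : g x - a <= 0)); last by rewrite subr_le0 gle.
  lra.
pose db q := dbar lam phi mu d0 pol expl (pol q) m.
pose s := expl m.
have step3 : (\int[lam]_x (dbar lam phi mu d0 pol expl (pol p) m x - g x)%:E <=
    L1dist lam (db p) (tild m p) + \sum_k L1dist lam (tild m (s k)) (db (s k)))%E.
  have ma : forall q, measurable_fun setT (fun x => `|db q x - tild m q x|).
    by move=> q; apply: mabs; apply: measurable_funB => //; exact: mdb.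
  have mb : forall k, measurable_fun setT (fun x => `|tild m (s k) x - db (s k) x|).
    by move=> k; apply: mabs; apply: measurable_funB => //; exact: mdb.
  apply: (@le_trans _ _ (\int[lam]_x (`|db p x - tild m p x| +
              \sum_k `|tild m (s k) x - db (s k) x|)%:E)%E).
    apply: ge0_le_integral => //.
    - by move=> x _; rewrite lee_fin subr_ge0.
    - by apply/measurable_EFinP; exact: measurable_funB.
    - apply/measurable_EFinP; apply: measurable_funD => //.
      by apply: measurable_sum => k; exact: mb.
    move=> x _; rewrite lee_fin.
    exact: (pointwise_E lamsf mphi mmu phi1 Pge0 P1 d0d polM AK dpos p x (bary m mH)).
  rewrite (eq_integral (fun x => (`|db p x - tild m p x|)%:E +
      \sum_k (`|tild m (s k) x - db (s k) x|)%:E)%E); last first.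
    by move=> x _; rewrite EFinD sumEFin.
  have f10 : forall x, setT x -> (0 <= (`|db p x - tild m p x|)%:E)%E.
    by move=> x _; rewrite lee_fin.
  have mf1 : measurable_fun setT (fun x => (`|db p x - tild m p x|)%:E).
    exact/measurable_EFinP.
  have f20 : forall x, setT x ->
      (0 <= \sum_k (`|tild m (s k) x - db (s k) x|)%:E)%E.
    by move=> x _; apply: sume_ge0 => k _; rewrite lee_fin.
  have mf2 : measurable_fun setT
      (fun x => \sum_k (`|tild m (s k) x - db (s k) x|)%:E)%E.
    apply: emeasurable_sum => k; exact/measurable_EFinP.
  rewrite (ge0_integralD lam measurableT f10 mf1 f20 mf2).
  apply: leeD => //.
  have hm : forall k, measurable_fun setT
      (fun x => (`|tild m (s k) x - db (s k) x|)%:E).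
    by move=> k; exact/measurable_EFinP.
  have h0 : forall k x, setT x -> (0 <= (`|tild m (s k) x - db (s k) x|)%:E)%E.
    by move=> k x _; rewrite lee_fin.
  by rewrite (ge0_integral_sum lam measurableT hm h0).
set M := (\big[maxe/-oo]_(q : I) L1dist lam (hatd m q) (dbar lam phi mu d0 pol expl (pol q) m))%E.
have LM : forall q, (L1dist lam (hatd m q) (db q) <= M)%E.
  by move=> q; exact: le_bigmax.
have M0 : (0 <= M)%E := le_trans (L1_ge0 _ _ _) (LM p).
apply: (le_trans step1); apply: (le_trans step2); apply: leeD => //.
apply: (le_trans step3).
clearbody M; case: M LM M0 => [r| |] LM M0 //; last first.
  rewrite muleC gt0_mulye; first exact: leey.
  by rewrite lte_fin mulr_gt0 // ltr0n.
have T' : forall q, (L1dist lam (tild m q) (db q) <= (r + r)%:E)%E.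
  move=> q; apply: (le_trans (T q)); rewrite EFinD; exact: leeD.
rewrite L1_sym.
apply: (le_trans (leeD (T' p) (lee_sum _ (fun k _ => T' (s k))))).
rewrite sumEFin -EFinD -EFinM lee_fin sumr_const card_ord -mulr_natr.
have r0 : 0 <= r by rewrite -lee_fin.
have d1 : 1 <= dd%:R :> R by rewrite ler1n.
nra.
Qed.
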